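(* Let $(T,\sigma)$ be a gene tree and $S$ a species tree, and let $a,b,c,d\in L(T)$ be genes such that $\sigma(a),\sigma(b),\sigma(c),\sigma(d)$ are pairwise distinct. Set $u:=\operatorname{lca}_S(\sigma(a),\sigma(b),\sigma(c),\sigma(d))$, $v_1:=\operatorname{lca}_S(\sigma(a),\sigma(b))$ and $v_2:=\operatorname{lca}_S(\sigma(c),\sigma(d))$. If $v_1\prec_S u$, $v_2\prec_S u$, and $\overline{T}[a,b,c,d]=(ac|bd)$ or $\overline{T}[a,b,c,d]=(ad|bc)$, then $u\prec_S\mu(\operatorname{lca}_T(a,b,c,d))$ for every reconciliation map $\mu:V(T)\to V(S)\cup E(S)$ without horizontal gene transfer (satisfying (R0)–(R4)). In particular, $\operatorname{lca}_T(a,b,c,d)$ is a duplication event, i.e., $\mu(\operatorname{lca}_T(a,b,c,d))\in E(S)$.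
   Context: A planted phylogenetic tree $T$ has a distinguished leaf $0_T$ (planted root) whose unique neighbour $\rho_T$ is the root; every other inner vertex has at least two children; $L(T)$ are the leaves other than $0_T$. $p\preceq_T q$ means $q$ lies on the path from $p$ to $0_T$; $\operatorname{lca}_T(A)$ is the $\preceq_T$-minimal vertex above all of $A$. A species tree $S$ is a planted phylogenetic tree with planted root $0_S$, root $\rho_S$, leaf set $\mathscr{S}$; $V^0(S)$ are its inner vertices (neither leaves nor $0_S$). The order $\preceq_S$ extends to $V(S)\cup E(S)$ by placing each edge $e=pq$ ($q$ child of $p$) strictly between $q$ and $p$ ($w\prec_S e$ iff $w\preceq_S q$; $e\prec_S w$ iff $p\preceq_S w$; for edges $e=pq$, $e'=p'q'$, $e\prec_S e'$ iff $p\preceq_S q'$); $\operatorname{lca}_S$ is the $\preceq_S$-minimal vertex above the given elements. A gene tree $(T,\sigma)$ is a planted phylogenetic tree with $\sigma:L(T)\to\mathscr{S}$. A reconciliation map without horizontal gene transfer is $\mu:V(T)\to V(S)\cup E(S)$ with: (R0) $\mu(v)=0_S$ iff $v=0_T$; (R1) $\mu(v)=\sigma(v)$ for $v\in L(T)$; (R2) $v\prec_T w\Rightarrow\mu(v)\preceq_S\mu(w)$; for each $v$ with $\mu(v)\in V^0(S)$: (R3.i) $\mu(v)=\operatorname{lca}_S(\mu(v'),\mu(v''))$ for at least two distinct children $v',v''$ of $v$, (R3.ii) $\mu(v'),\mu(v'')$ are $\preceq_S$-incomparable for any two distinct children of $v$; and (R4) for leaves $x,y,z$, if $\mu(\operatorname{lca}_T(x,y))=\mu(\operatorname{lca}_T(x,z))\in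 V^0(S)$ then $\operatorname{lca}_S(\sigma(x),\sigma(y))=\operatorname{lca}_S(\sigma(x),\sigma(z))$. A vertex $v$ is a duplication if $\mu(v)\in E(S)$. The unrooted tree $\overline{T}$ is obtained by deleting $0_T$ and its edge and suppressing $\rho_T$ if it has two children; for four leaves $p,q,r,s$, $\overline{T}[p,q,r,s]$ is the subtree spanned by them with degree-2 vertices suppressed, and $\overline{T}[p,q,r,s]=(pq|rs)$ if some edge of it separates $\{p,q\}$ from $\{r,s\}$. *)

(* Defs.v *)
From mathcomp Require Import all_boot.
Set Implicit Arguments.
Unset Strict Implicit.
Unset Printing Implicit Defensive.

(* A planted tree on a finite vertex type, given by its parent map.
   [pt_root0] is the planted root 0_T; [pt_par 0_T = 0_T] by convention. *)
Record ptree := PTree {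
  pt_V :> finType;
  pt_par : pt_V -> pt_V;
  pt_root0 : pt_V
}.
Arguments pt_par : clear implicits.
Arguments pt_root0 : clear implicits.

Section Trees.
Variable T : ptree.

(* p ⪯_T q : q lies on the path from p to 0_T *)
Definition anc (p q : T) : bool := connect (frel (pt_par T)) p q.
Definition strict_anc (p q : T) : bool := anc p q && (p != q).

Definition child (v w : T) : bool := (v != pt_root0 T) && (pt_par T v == w).
Definition children (w : T) : {set T} := [set v | child v w].

Definition is_leaf (v : T) : bool := (v != pt_root0 T) && (children v == set0).
Definition is_inner (v : T) : bool := (v != pt_root0 T) && ~~ is_leaf v.

Definition planted_phylo : Prop :=
  [/\ pt_par T (pt_root0 T) = pt_root0 T,
      (forall v : T, anc v (pt_root0 T)),             (* connected, acyclic *)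
      #|children (pt_root0 T)| = 1                    (* 0_T is a leaf with unique neighbour rho_T *)
    & (forall v : T, is_inner v -> 2 <= #|children v|)].

Definition is_lca (s : seq T) (w : T) : bool :=
  all (fun x => anc x w) s && [forall w', all (fun x => anc x w') s ==> anc w w'].
Definition lca (s : seq T) : T := odflt (pt_root0 T) [pick w | is_lca s w].

(* four-leaf quartet: some edge (x, parent x) of T separates {p,q} from {r,s};
   removing that edge leaves the descendants of x on one side. *)
Definition quartet (p q r s : T) : Prop :=
  exists x : T, x != pt_root0 T /\
    ((anc p x && anc q x && ~~ anc r x && ~~ anc s x) ||
     (anc r x && anc s x && ~~ anc p x && ~~ anc q x)).
End Trees.

(* Elements of V(S) ∪ E(S): a vertex, or an edge represented by its lower
   endpoint q (the edge is (par q) q, and q must differ from 0_S). *)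
Inductive vedge (V : Type) := Vx of V | Ed of V.
Arguments Vx {V}.
Arguments Ed {V}.

Section Species.
Variable S : ptree.

Definition veLe (x y : vedge S) : bool :=
  match x, y with
  | Vx w, Vx w' => anc w w'
  | Vx w, Ed q => anc w q
  | Ed q, Vx w => anc (pt_par S q) w
  | Ed q, Ed q' => (q == q') || anc (pt_par S q) q'
  end.
Definition veLt (x y : vedge S) : bool :=
  match x, y with
  | Vx w, Vx w' => anc w w' && (w != w')
  | Vx w, Ed q => anc w q
  | Ed q, Vx w => anc (pt_par S q) w
  | Ed q, Ed q' => anc (pt_par S q) q'
  end.

Definition is_ve_lca (x y : vedge S) (w : S) : bool :=
  veLe x (Vx w) && veLe y (Vx w) &&
  [forall w', (veLe x (Vx w') && veLe y (Vx w')) ==> anc w w'].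
Definition ve_lca (x y : vedge S) : S := odflt (pt_root0 S) [pick w | is_ve_lca x y w].
End Species.

Definition reconciliation (T S : ptree) (sigma : T -> S) (mu : T -> vedge S) : Prop :=
  [/\ (* mu maps into V(S) ∪ E(S): edges have a lower endpoint different from 0_S *)
      (forall v q, mu v = Ed q -> q != pt_root0 S),
      (forall v, mu v = Vx (pt_root0 S) <-> v = pt_root0 T),
      (forall v, is_leaf v -> mu v = Vx (sigma v)),
      (forall v w, strict_anc v w -> veLe (mu v) (mu w)) &
   [/\
      (forall v x, mu v = Vx x -> is_inner x ->
         exists v' v'', [/\ v' != v'', child v' v, child v'' v &
                            x = ve_lca (mu v') (mu v'')]),
      (forall v x, mu v = Vx x -> is_inner x ->
         forall v' v'', child v' v -> child v'' v -> v' != v'' ->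
           ~~ veLe (mu v') (mu v'') && ~~ veLe (mu v'') (mu v')) &
      (forall x y z, is_leaf x -> is_leaf y -> is_leaf z ->
         mu (lca [:: x; y]) = mu (lca [:: x; z]) ->
         (exists w, mu (lca [:: x; y]) = Vx w /\ is_inner w) ->
         lca [:: sigma x; sigma y] = lca [:: sigma x; sigma z])]].

(* Main.v *)
Require Import Defs.
From mathcomp Require Import all_boot.
Set Implicit Arguments.
Unset Strict Implicit.
Unset Printing Implicit Defensive.

Section G.
Variable T : ptree.
Hypothesis HT : planted_phylo T.
Local Notation f := (pt_par T).
Local Notation r := (pt_root0 T).

Lemma ancP (x y : T) : anc x y -> exists n, iter n f x = y.
Proof. move=> h; exists (findex f x y); exact: iter_findex. Qed.

Lemma anc_iter (x : T) n : anc x (iter n f x).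
Proof. exact: fconnect_iter. Qed.

Lemma anc_refl (x : T) : anc x x.
Proof. exact: connect0. Qed.

Lemma anc_trans (x y z : T) : anc x y -> anc y z -> anc x z.
Proof. exact: connect_trans. Qed.

Lemma anc_par (x : T) : anc x (f x).
Proof. exact: (anc_iter x 1). Qed.

Lemma anc_chain (x y z : T) : anc x y -> anc x z -> anc y z || anc z y.
Proof.
move=> /ancP [n <-] /ancP [m <-].
case: (leqP n m) => h.
  by rewrite -(subnK h) iterD anc_iter.
by rewrite -(subnK (ltnW h)) iterD anc_iter orbT.
Qed.

Lemma par_fix (v : T) : f v = v -> v = r.
Proof.
case: HT => _ H _ _ hv; have [n <-] := ancP (H v).
by rewrite iter_fix.
Qed.

Lemma anc_antisym (x y : T) : anc x y -> anc y x -> x = y.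
Proof.
move=> /ancP [n hn] /ancP [m hm].
case: n hn => [|n] hn; first by [].
have per : forall j, iter (j * (m + n.+1)) f x = x.
  elim=> [|j IH] //=.
  by rewrite mulSn iterD IH iterD hn hm.
case: HT => _ H _ _; have [p hp] := ancP (H x).
have hr : f r = r by case: HT.
have xr : x = r.
  have le : p <= p * (m + n.+1) by rewrite leq_pmulr // addnS.
  by rewrite -[LHS](per p) -(subnK le) iterD hp iter_fix.
by rewrite -hn xr iter_fix.
Qed.

Lemma child_path (x y : T) : anc x y -> x != y ->
  exists c, child c y && anc x c.
Proof.
move=> h neq.
have ex : exists n, iter n f x == y by have [n hn] := ancP h; exists n; apply/eqP.
case: (ex_minnP ex) => n /eqP hn hmin.
case: n hn hmin => [|n] hn hmin; first by rewrite -hn eqxx in neq.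
exists (iter n f x); rewrite anc_iter andbT /child.
rewrite -iterS hn eqxx andbT.
apply/eqP => e.
have : iter n f x == y.
  by rewrite -hn iterS e; case: HT => -> _ _ _.
by move/hmin; rewrite ltnn.
Qed.

Lemma anc_par_strict (q y : T) : anc q y -> q != y -> anc (f q) y.
Proof.
move=> /ancP [[|n] hn] neq; first by rewrite -hn eqxx in neq.
by rewrite -hn iterSr anc_iter.
Qed.

Lemma leaf_top (l y : T) : is_leaf l -> anc y l -> y = l.
Proof.
move=> /andP [_ /eqP hc] h; apply/eqP; apply: contraT => neq.
have [c /andP [hc' _]] := child_path h neq.
have : c \in children l by rewrite inE.
by rewrite hc inE.
Qed.

Lemma lca_spec (s : seq T) : s != [::] -> is_lca s (lca s).
Proof.
case: s => [//|x s] _.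
rewrite /lca; case: pickP => [//|none]; exfalso.
case: HT => h0 H _ _.
have ex : exists n, all (fun y => anc y (iter n f x)) (x :: s).
  have [n hn] := ancP (H x); exists n; rewrite hn; apply/allP => y _; exact: H.
case: (ex_minnP ex) => n hn hmin.
move: (none (iter n f x)); rewrite /is_lca hn /=.
move/negP; apply; apply/forallP => w'; apply/implyP => hw.
have [m hm] := ancP (andP hw).1.
have := hmin m; rewrite hm => /(_ hw) le.
by rewrite -hm -(subnK le) iterD anc_iter.
Qed.

Lemma is_lca_anc (s : seq T) (w x : T) : is_lca s w -> x \in s -> anc x w.
Proof. by case/andP => /allP h _; apply: h. Qed.

Lemma is_lca_min (s : seq T) (w w' : T) : is_lca s w -> all (fun x => anc x w') s -> anc w w'.
Proof. by case/andP => _ /forallP /(_ w') /implyP; apply. Qed.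

Lemma lca_not_root (s : seq T) : s != [::] -> all (fun x => x != r) s -> lca s != r.
Proof.
move=> ne hs.
case: HT => h0 H h1 _.
have [rho hrho] := cards1P (introT eqP h1).
have below : forall v, v != r -> anc v rho.
  move=> v nv; have [c /andP [hc hac]] := child_path (H v) nv.
  have : c \in children r by rewrite inE.
  by rewrite hrho inE => /eqP <-.
have crho : child rho r.
  have : rho \in children r by rewrite hrho inE.
  by rewrite inE.
apply/eqP => e.
have a1 : anc (lca s) rho.
  apply: is_lca_min (lca_spec ne) _; apply/allP => x hx; apply: below; exact: (allP hs).
rewrite e in a1.
move: crho; rewrite /child => /andP [nr /eqP pr].
have : rho = r by apply: anc_antisym; [rewrite -pr; exact: anc_par | exact a1].
by move/eqP; rewrite (negbTE nr).
Qed.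

End G.

Section SS.
Variable S : ptree.
Hypothesis HS : planted_phylo S.

Definition lower (e : vedge S) : S := match e with Vx w => w | Ed q => q end.

Lemma veLe_Vx z e : veLe (Vx z) e = anc z (lower e).
Proof. by case: e. Qed.

Lemma veLe_toVx e x : veLe e (Vx x) -> anc (lower e) x.
Proof. case: e => [y|q] //= h; exact: anc_trans (anc_par q) h. Qed.

Lemma ve_cmp z e1 e2 : anc z (lower e1) -> anc z (lower e2) ->
  veLe e1 e2 || veLe e2 e1.
Proof.
move=> h1 h2; have := anc_chain h1 h2.
case: e1 e2 {h1 h2} => [y|q] [y'|q'] /=.
- by [].
- case/orP=> [->//|h]; case: (eqVneq q' y) => [->|ne]; first by rewrite anc_refl.
  by rewrite (anc_par_strict h ne) orbT.
- case/orP=> [h|->]; last by rewrite orbT.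
  case: (eqVneq q y') => [->|ne]; first by rewrite anc_refl orbT.
  by rewrite (anc_par_strict h ne).
- case: (eqVneq q q') => [-> _|ne]; first by [].
  have ne' : q' != q by rewrite eq_sym.
  case/orP=> h; first by rewrite (anc_par_strict h ne).
  by rewrite (anc_par_strict h ne') !orbT.
Qed.

Lemma key (p1 p2 p3 p4 v1 v2 u : S) :
  anc p1 v1 -> anc p2 v1 -> anc p3 v2 -> anc p4 v2 ->
  anc v1 u -> anc v2 u -> v1 != u -> v2 != u ->
  (forall z, anc p1 z -> anc p2 z -> anc p3 z -> anc p4 z -> anc u z) ->
  forall z, anc p1 z -> anc p3 z -> anc u z.
Proof.
move=> a1 a2 a3 a4 b1 b2 n1 n2 hmin z z1 z3.
case/orP: (anc_chain a1 z1) => h.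
  case/orP: (anc_chain a3 z3) => h'.
    apply: hmin => //; [exact: anc_trans a2 h | exact: anc_trans a4 h'].
  exfalso; move/negP: n2; apply; apply/eqP; apply: (anc_antisym HS b2).
  apply: hmin; [exact: anc_trans a1 (anc_trans h h') | exact: anc_trans a2 (anc_trans h h') | by [] | by []].
have c3 : anc p3 v1 by exact: anc_trans z3 h.
case/orP: (anc_chain c3 a3) => h'.
  exfalso; move/negP: n2; apply; apply/eqP; apply: (anc_antisym HS b2).
  apply: hmin => //; [exact: anc_trans a1 h' | exact: anc_trans a2 h'].
exfalso; move/negP: n1; apply; apply/eqP; apply: (anc_antisym HS b1).
apply: hmin; [by [] | by [] | exact: anc_trans a3 h' | exact: anc_trans a4 h'].
Qed.
End SS.

Theorem theorem2 (T S : ptree) (sigma : T -> S) (a b c d : T) :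
  planted_phylo T -> planted_phylo S ->
  (forall v : T, is_leaf v -> is_leaf (sigma v)) ->
  is_leaf a -> is_leaf b -> is_leaf c -> is_leaf d ->
  uniq [:: sigma a; sigma b; sigma c; sigma d] ->
  let u := lca [:: sigma a; sigma b; sigma c; sigma d] in
  let v1 := lca [:: sigma a; sigma b] in
  let v2 := lca [:: sigma c; sigma d] in
  strict_anc v1 u -> strict_anc v2 u ->
  (quartet a c b d \/ quartet a d b c) ->
  forall mu : T -> vedge S, reconciliation sigma mu ->
    veLt (Vx u) (mu (lca [:: a; b; c; d])) /\
    (exists q, mu (lca [:: a; b; c; d]) = Ed q).
Proof.
move=> HT HS _ la lb lc ld Hun u v1 v2 s1 s2 Hq mu Hrec.
case: Hrec => Hed HR0 HR1 HR2 [HR3i HR3ii HR4].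
move: Hun; rewrite /= !inE !negb_or => Hun.
have nab : sigma a != sigma b by case/and4P: Hun => /and3P [].
have ncd : sigma c != sigma d by case/and4P: Hun.
have ab : a != b by apply: contraNneq nab => ->.
have cd : c != d by apply: contraNneq ncd => ->.
set w := lca [:: a; b; c; d].
have Hw := lca_spec HT (s := [:: a; b; c; d]) isT.
have wa : anc a w by apply: is_lca_anc Hw _; rewrite !inE eqxx.
have wb : anc b w by apply: is_lca_anc Hw _; rewrite !inE eqxx !orbT.
have wc : anc c w by apply: is_lca_anc Hw _; rewrite !inE eqxx !orbT.
have wd : anc d w by apply: is_lca_anc Hw _; rewrite !inE eqxx !orbT.
have wmin : forall w', anc a w' -> anc b w' -> anc c w' -> anc d w' -> anc w w'.
  by move=> w' h1 h2 h3 h4; apply: is_lca_min Hw _; rewrite /= h1 h2 h3 h4.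
have Hu := lca_spec HS (s := [:: sigma a; sigma b; sigma c; sigma d]) isT.
have ua : anc (sigma a) u by apply: is_lca_anc Hu _; rewrite !inE eqxx.
have ub : anc (sigma b) u by apply: is_lca_anc Hu _; rewrite !inE eqxx !orbT.
have uc : anc (sigma c) u by apply: is_lca_anc Hu _; rewrite !inE eqxx !orbT.
have ud : anc (sigma d) u by apply: is_lca_anc Hu _; rewrite !inE eqxx !orbT.
have umin : forall z, anc (sigma a) z -> anc (sigma b) z -> anc (sigma c) z ->
    anc (sigma d) z -> anc u z.
  by move=> z h1 h2 h3 h4; apply: is_lca_min Hu _; rewrite /= h1 h2 h3 h4.
have Hv1 := lca_spec HS (s := [:: sigma a; sigma b]) isT.
have v1a : anc (sigma a) v1 by apply: is_lca_anc Hv1 _; rewrite !inE eqxx.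
have v1b : anc (sigma b) v1 by apply: is_lca_anc Hv1 _; rewrite !inE eqxx !orbT.
have Hv2 := lca_spec HS (s := [:: sigma c; sigma d]) isT.
have v2c : anc (sigma c) v2 by apply: is_lca_anc Hv2 _; rewrite !inE eqxx.
have v2d : anc (sigma d) v2 by apply: is_lca_anc Hv2 _; rewrite !inE eqxx !orbT.
case/andP: s1 => v1u n1; case/andP: s2 => v2u n2.
have Kac := key HS v1a v1b v2c v2d v1u v2u n1 n2 umin.
have Kbc := key HS v1b v1a v2c v2d v1u v2u n1 n2
  (fun z hb ha hc hd => umin z ha hb hc hd).
have Kad := key HS v1a v1b v2d v2c v1u v2u n1 n2
  (fun z ha hb hd hc => umin z ha hb hc hd).
have Kbd := key HS v1b v1a v2d v2c v1u v2u n1 n2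
  (fun z hb ha hd hc => umin z ha hb hc hd).
have mu_above : forall p y, is_leaf p -> anc p y -> anc (sigma p) (lower (mu y)).
  move=> p y lp h; case: (eqVneq p y) => [<-|ne].
    by rewrite HR1 //= anc_refl.
  have := HR2 p y (introT andP (conj h ne)).
  by rewrite HR1 // veLe_Vx.
have G : forall p p' xq s, is_leaf p -> is_leaf p' -> anc p w -> anc s w ->
    anc p xq -> anc p' xq -> ~~ anc s xq ->
    (forall z, anc (sigma p) z -> anc (sigma p') z -> anc u z) ->
    exists w', child w' w /\ anc u (lower (mu w')).
  move=> p p' xq s lp lp' pw sw px p'x nsx K.
  have xw : anc xq w.
    case/orP: (anc_chain px pw) => // h.
    by rewrite (anc_trans sw h) in nsx.
  have nxw : xq != w by apply/eqP => e; rewrite e sw in nsx.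
  have [w' /andP [cw' xw']] := child_path HT xw nxw.
  exists w'; split => //; apply: K; apply: mu_above => //; exact: anc_trans xw'.
have [w' [cw' uw']] : exists w', child w' w /\ anc u (lower (mu w')).
  case: Hq => [[xq [_ /orP [/andP [/andP [/andP [h1 h2] h3] h4] |
                             /andP [/andP [/andP [h1 h2] h3] h4]]]] |
               [xq [_ /orP [/andP [/andP [/andP [h1 h2] h3] h4] |
                             /andP [/andP [/andP [h1 h2] h3] h4]]]]].
  - exact: (G a c xq b).
  - exact: (G b d xq a).
  - exact: (G a d xq b).
  - exact: (G b c xq a).
have pw : forall p q, is_leaf p -> anc q w -> p != q -> p != w.
  move=> p q lp qw pq; apply/eqP => e; rewrite -e in qw.
  by move/eqP: pq; apply; rewrite (leaf_top HT lp qw).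
have aw : a != w by apply: (pw a b).
have bw : b != w by apply: (pw b a) => //; rewrite eq_sym.
have cw : c != w by apply: (pw c d).
have dw : d != w by apply: (pw d c) => //; rewrite eq_sym.
have [q Hmq] : exists q, mu w = Ed q.
  case Hmw: (mu w) => [x|q]; last by exists q.
  exfalso.
  have wr : w != pt_root0 T.
    apply: (lca_not_root HT (s := [:: a; b; c; d]) isT).
    by rewrite /= (andP la).1 (andP lb).1 (andP lc).1 (andP ld).1.
  have xr : x != pt_root0 S.
    apply/eqP => e; have := (HR0 w).1; rewrite Hmw e => /(_ erefl) /eqP.
    by rewrite (negbTE wr).
  have /andP [w'r /eqP pw'] := cw'.
  have w'w : anc w' w by rewrite -pw'; exact: anc_par.
  have nw'w : w' != w.
    apply/eqP => e; rewrite e in pw'.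
    by move: wr; rewrite (par_fix HT pw') eqxx.
  have hx : anc (lower (mu w')) x.
    apply: veLe_toVx; rewrite -Hmw; apply: HR2; exact: (introT andP (conj w'w nw'w)).
  have ux : anc u x := anc_trans uw' hx.
  have v1x : anc v1 x := anc_trans v1u ux.
  have nv1x : v1 != x.
    apply/eqP => e; rewrite -e in ux.
    by move: n1; rewrite (anc_antisym HS v1u ux) eqxx.
  have [c0 /andP [cc0 _]] := child_path HS v1x nv1x.
  have inx : is_inner x.
    rewrite /is_inner /is_leaf xr /=; apply/set0Pn; exists c0; by rewrite inE.
  have allw' : forall p, is_leaf p -> anc p w -> p != w -> anc (sigma p) u -> anc p w'.
    move=> p lp pw0 npw spu.
    have [wp /andP [cwp pwp]] := child_path HT pw0 npw.
    case: (eqVneq wp w') => [<- //|ne].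
    have ne' : w' != wp by rewrite eq_sym.
    have := HR3ii w x Hmw inx w' wp cw' cwp ne'.
    have := ve_cmp (anc_trans spu uw') (mu_above p wp lp pwp).
    by case/orP => h /andP [h1 h2]; [rewrite h in h1 | rewrite h in h2].
  have := wmin w' (allw' a la wa aw ua) (allw' b lb wb bw ub)
    (allw' c lc wc cw uc) (allw' d ld wd dw ud).
  move=> h; have e := anc_antisym HT h w'w.
  by rewrite e eqxx in nw'w.
have hq : forall p, is_leaf p -> anc p w -> anc (sigma p) q.
  by move=> p lp h; have := mu_above p w lp h; rewrite Hmq.
split; last by exists q.
rewrite Hmq /=; apply: umin; exact: hq.
Qed.
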